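(* Let $\mathcal{S}_2=\{\nu_{Q_AQ_B},\{\{P^x_a\}_a\}_x,\{\{Q^y_b\}_b\}_y\}$ be a quantum strategy for the two-player game $\mathcal{G}_2$ whose winning probability is at least $\omega_{\mathrm{exp}}$, and let $\mathcal{S}_3=\{\nu_{Q_AQ_BE},\{\{F^{xy}_c\}_{c\in\{0,1\}}\}_{x,y},\{\{P^x_a\}_a\}_x,\{\{Q^y_b\}_b\}_y\}$ be any extension of it (i.e. $\mathrm{Tr}_E\nu_{Q_AQ_BE}=\nu_{Q_AQ_B}$, Alice's and Bob's measurements unchanged, Eve measures POVM $\{F^{xy}_c\}_c$ on $E$ after learning $x,y$). Let $G_E$ be the event that Eve's output $c$ equals Alice's bit $S_A=SK_A(a,x,y)$. Then $$\Pr[G_E]_{\mathcal{S}_3}\le 1-\omega_{\mathrm{exp}}+\omega_3,$$ and consequently, for any $\beta\in[\omega_3,\omega_2]$ with $1-\beta+\omega_3>0$, $$-\log_2\Pr[G_E]_{\mathcal{S}_3}\ \ge\ \frac{\omega_{\mathrm{exp}}-\beta}{\ln 2\,(1-\beta+\omega_3)}-\log_2(1-\beta+\omega_3).$$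
   Context: A two-player non-local game $\mathcal{G}_2$ has finite question sets $\mathcal{X},\mathcal{Y}$, answer sets $\mathcal{A},\mathcal{B}$, a product question distribution $\pi$, and predicate $V(x,y,a,b)=[SK_A(a,x,y)=SK_B(b,x,y)]$ for deterministic bit-valued functions $SK_A,SK_B$. Its three-player extension $\mathcal{G}_3$: a third player receives both $(x,y)$ and outputs $c\in\{0,1\}$; the players win iff $SK_A(a,x,y)=SK_B(b,x,y)=c$. $\omega_2,\omega_3$ denote the quantum values of $\mathcal{G}_2,\mathcal{G}_3$ (supremum of winning probability over quantum strategies with arbitrary finite-dimensional shared states and local POVMs). $\omega_{\mathrm{exp}}\in[\omega_3,\omega_2]$. *)

(* Defs.v *)
From mathcomp Require Import all_boot all_order all_algebra.
From mathcomp Require Import classical_sets reals exp.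
From mathcomp.real_closed Require Import complex mxtens.

Set Implicit Arguments.
Unset Strict Implicit.
Unset Printing Implicit Defensive.

Import Order.TTheory GRing.Theory Num.Theory.
Local Open Scope ring_scope.

Section Quantum.
Variable R : realType.
Local Notation C := (R[i]).

Definition adjmx m n (M : 'M[C]_(m, n)) : 'M[C]_(n, m) := (map_mx Num.conj M)^T.

Definition psdmx n (M : 'M[C]_n) : Prop :=
  adjmx M = M /\ forall v : 'cV[C]_n, 0 <= (adjmx v *m M *m v) 0 0.

Definition density n (rho : 'M[C]_n) : Prop := psdmx rho /\ \tr rho = 1.

Definition povm (O : finType) n (E : O -> 'M[C]_n) : Prop :=
  (forall o, psdmx (E o)) /\ \sum_(o : O) E o = 1%:M.

Definition ptrace2 m n (M : 'M[C]_(m * n)) : 'M[C]_m :=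
  \matrix_(i, j) \sum_(k < n) M (mxtens_index (i, k)) (mxtens_index (j, k)).

Definition probmx n (rho M : 'M[C]_n) : R := complex.Re (\tr (rho *m M)).

Variables (X Y A B : finType).

Definition is_distr (T : finType) (mu : T -> R) : Prop :=
  (forall t, 0 <= mu t) /\ \sum_(t : T) mu t = 1.

Definition strategy2 dA dB (rho : 'M[C]_(dA * dB))
  (P : X -> A -> 'M[C]_dA) (Q : Y -> B -> 'M[C]_dB) : Prop :=
  density rho /\ (forall x, povm (P x)) /\ (forall y, povm (Q y)).

Definition win2 (muX : X -> R) (muY : Y -> R)
  (SKA : A -> X -> Y -> bool) (SKB : B -> X -> Y -> bool)
  dA dB (rho : 'M[C]_(dA * dB))
  (P : X -> A -> 'M[C]_dA) (Q : Y -> B -> 'M[C]_dB) : R :=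
  \sum_(x : X) \sum_(y : Y) muX x * muY y *
    \sum_(a : A) \sum_(b : B)
      (SKA a x y == SKB b x y)%:R * probmx rho (P x a *t Q y b).

Definition strategy3 dA dB dE (rho : 'M[C]_(dA * dB * dE))
  (F : X -> Y -> bool -> 'M[C]_dE)
  (P : X -> A -> 'M[C]_dA) (Q : Y -> B -> 'M[C]_dB) : Prop :=
  density rho /\ (forall x y, povm (F x y)) /\
  (forall x, povm (P x)) /\ (forall y, povm (Q y)).

Definition win3 (muX : X -> R) (muY : Y -> R)
  (SKA : A -> X -> Y -> bool) (SKB : B -> X -> Y -> bool)
  dA dB dE (rho : 'M[C]_(dA * dB * dE))
  (F : X -> Y -> bool -> 'M[C]_dE)
  (P : X -> A -> 'M[C]_dA) (Q : Y -> B -> 'M[C]_dB) : R :=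
  \sum_(x : X) \sum_(y : Y) muX x * muY y *
    \sum_(a : A) \sum_(b : B) \sum_(c : bool)
      ((SKA a x y == c) && (SKB b x y == c))%:R *
        probmx rho ((P x a *t Q y b) *t F x y c).

Definition probGE (muX : X -> R) (muY : Y -> R)
  (SKA : A -> X -> Y -> bool)
  dA dB dE (rho : 'M[C]_(dA * dB * dE))
  (F : X -> Y -> bool -> 'M[C]_dE)
  (P : X -> A -> 'M[C]_dA) (Q : Y -> B -> 'M[C]_dB) : R :=
  \sum_(x : X) \sum_(y : Y) muX x * muY y *
    \sum_(a : A) \sum_(b : B) \sum_(c : bool)
      (SKA a x y == c)%:R * probmx rho ((P x a *t Q y b) *t F x y c).

Definition omega2 muX muY SKA SKB : R :=
  sup [set p | exists (dA dB : nat) (rho : 'M[C]_(dA * dB))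
          (P : X -> A -> 'M[C]_dA) (Q : Y -> B -> 'M[C]_dB),
          strategy2 rho P Q /\ p = win2 muX muY SKA SKB rho P Q].

Definition omega3 muX muY SKA SKB : R :=
  sup [set p | exists (dA dB dE : nat) (rho : 'M[C]_(dA * dB * dE))
          (F : X -> Y -> bool -> 'M[C]_dE)
          (P : X -> A -> 'M[C]_dA) (Q : Y -> B -> 'M[C]_dB),
          strategy3 rho F P Q /\ p = win3 muX muY SKA SKB rho F P Q].

End Quantum.

Definition log2 (R : realType) (x : R) : R := ln x / ln 2.

(* Main.v *)
Require Import Defs.
From mathcomp Require Import all_boot all_order all_algebra.
From mathcomp Require Import classical_sets reals exp.
From mathcomp.real_closed Require Import complex mxtens.
From mathcomp Require Import ring lra.
Set Implicit Arguments. Unset Strict Implicit.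
Import Order.TTheory GRing.Theory Num.Theory.
Local Open Scope ring_scope.


Section Q.
Variable R : realType.
Local Notation C := (R[i]).

Lemma col_mulmx (T : pzSemiRingType) m n p (A : 'M[T]_(m, n)) (B : 'M_(n, p)) i :
  A *m col i B = col i (A *m B).
Proof. by apply/matrixP=> a b; rewrite !mxE; apply: eq_bigr => k _; rewrite !mxE. Qed.

Definition cone n (M : 'M[C]_n) : Prop :=
  exists (I : finType) (d : I -> C) (w : I -> 'cV[C]_n),
    (forall i, 0 <= d i) /\ M = \sum_i d i *: (w i *m adjmx (w i)).

Lemma psd_cone n (M : 'M[C]_n) : psdmx M -> cone M.
Proof.
move=> [hM pM].
have herm : M \is hermsymmx.
  apply/is_hermitianmxP; rewrite expr0 scale1r.
  by rewrite -{1}hM /adjmx map_trmx.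
have /orthomx_spectralP eq := hermitian_normalmx herm.
set U := spectralmx M in eq; set s := spectral_diag M in eq.
have Uu : U \is unitarymx by exact: spectral_unitarymx.
rewrite invmx_unitary // in eq.
pose w := fun i : 'I_n => col i (map_mx Num.conj U^T).
exists (ordinal n), (fun i => s 0 i), w; split.
  move=> i; have := pM (w i).
  suff -> : (adjmx (w i) *m M *m w i) 0 0 = s 0 i by [].
  have aw : adjmx (w i) = row i U.
    by apply/matrixP=> a b; rewrite !mxE conjCK.
  rewrite aw {1}eq -row_mul !mulmxA -row_mul (unitarymxP Uu) -mulmxA col_mulmx.
  rewrite (unitarymxP Uu) !mxE (bigD1 i) //= big1 ?addr0.
    by rewrite mul1mx !mxE eqxx !mulr1n mulr1.
  by move=> j /negbTE ji; rewrite mul1mx !mxE eq_sym ji !mulr0n mulr0.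
rewrite {1}eq; apply/matrixP=> a b.
rewrite mxE summxE; apply: eq_bigr => i _.
rewrite !mxE big_ord1 !mxE conjCK (bigD1 i) //= big1 ?addr0.
  by rewrite !mxE eqxx mulr1n mulrCA mulrA.
by move=> j /negbTE ji; rewrite !mxE ji mulr0n mulr0.
Qed.

Lemma ReD (x y : C) : complex.Re (x + y) = complex.Re x + complex.Re y.
Proof. by case: x; case: y. Qed.

Lemma Re_sum (I : finType) (f : I -> C) :
  complex.Re (\sum_i f i) = \sum_i complex.Re (f i).
Proof. by apply: (big_morph _ ReD). Qed.

Lemma Re_ge0 (x : C) : 0 <= x -> 0 <= complex.Re x.
Proof. by rewrite lecE => /andP[]. Qed.

Lemma probmx_sum n (rho : 'M[C]_n) (I : finType) (f : I -> 'M[C]_n) :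
  probmx rho (\sum_i f i) = \sum_i probmx rho (f i).
Proof.
apply: (big_morph _ (fun A B => _) _).
  by move=> A B; rewrite /probmx mulmxDr mxtraceD ReD.
by rewrite /probmx mulmx0 mxtrace0.
Qed.

Lemma tens_suml (I : finType) m n p q (f : I -> 'M[C]_(m, n)) (N : 'M[C]_(p, q)) :
  (\sum_i f i) *t N = \sum_i (f i *t N).
Proof.
apply/matrixP=> a b; case: (mxtens_indexP a) => a1 a2; case: (mxtens_indexP b) => b1 b2.
rewrite tensmxE !summxE mulr_suml; apply: eq_bigr => i _; by rewrite tensmxE.
Qed.

Lemma tens_sumr (I : finType) m n p q (M : 'M[C]_(m, n)) (f : I -> 'M[C]_(p, q)) :
  M *t (\sum_i f i) = \sum_i (M *t f i).
Proof.
apply/matrixP=> a b; case: (mxtens_indexP a) => a1 a2; case: (mxtens_indexP b) => b1 b2.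
rewrite tensmxE !summxE mulr_sumr; apply: eq_bigr => i _; by rewrite tensmxE.
Qed.

Lemma tensZ m n p q (c e : C) (M : 'M[C]_(m, n)) (N : 'M[C]_(p, q)) :
  (c *: M) *t (e *: N) = (c * e) *: (M *t N).
Proof.
apply/matrixP=> a b; case: (mxtens_indexP a) => a1 a2; case: (mxtens_indexP b) => b1 b2.
by rewrite !mxE !mxtens_indexK /= mulrACA.
Qed.

Lemma tens11 m n : (1%:M : 'M[C]_m) *t (1%:M : 'M[C]_n) = 1%:M.
Proof.
apply/matrixP=> a b; case: (mxtens_indexP a) => a1 a2; case: (mxtens_indexP b) => b1 b2.
rewrite tensmxE !mxE -natrM mulnb.
congr ((_ : bool)%:R).
apply/andP/eqP => [[/eqP-> /eqP->] //|].
by move/(congr1 (@mxtens_unindex m n)); rewrite !mxtens_indexK => -[-> ->].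
Qed.

Lemma adjmx_tens m n p q (M : 'M[C]_(m, n)) (N : 'M[C]_(p, q)) :
  adjmx (M *t N) = adjmx M *t adjmx N.
Proof. by rewrite /adjmx map_mxT trmx_tens. Qed.

Lemma cone_tens m n (M : 'M[C]_m) (N : 'M[C]_n) : cone M -> cone N -> cone (M *t N).
Proof.
move=> [I [d [w [d0 ->]]]] [J [e [z [e0 ->]]]].
exists (prod I J), (fun ij => d ij.1 * e ij.2),
  (fun ij => (w ij.1 *t z ij.2 : 'cV[C]_(m * n))); split.
  by move=> [i j] /=; rewrite mulr_ge0.
rewrite tens_suml.
rewrite -(pair_big xpredT xpredT (fun i j => (d i * e j) *: ((w i *t z j : 'cV[C]_(m * n)) *m adjmx (w i *t z j : 'cV[C]_(m * n))))) /=.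
apply: eq_bigr => i _.
rewrite tens_sumr; apply: eq_bigr => j _.
rewrite tensZ; congr (_ *: _); rewrite -tensmx_mul. apply/matrixP => a b; rewrite !mxE; apply: eq_bigr => k _; congr (_ * _); by rewrite (adjmx_tens (w i) (z j)).
Qed.

Lemma cone_prob n (rho M : 'M[C]_n) : psdmx rho -> cone M -> 0 <= probmx rho M.
Proof.
move=> [_ prho] [I [d [w [d0 ->]]]].
rewrite probmx_sum; apply: sumr_ge0 => i _; apply: Re_ge0.
rewrite -scalemxAr linearZ /= mulr_ge0 //.
rewrite mulmxA mxtrace_mulC /mxtrace big_ord1 mulmxA; exact: prho.
Qed.

Lemma sum_pair (I J : finType) (G : I * J -> C) :
  \sum_p G p = \sum_i \sum_j G (i, j).
Proof. by rewrite (pair_big xpredT xpredT (fun i j => G (i, j))); apply: eq_bigr => -[]. Qed.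

Lemma sum_delta (I : finType) (g : I -> C) (a : C) (k : I) :
  \sum_j g j * (a * (j == k)%:R) = g k * a.
Proof.
rewrite (bigD1 k) //= eqxx mulr1 big1 ?addr0 // => j /negbTE ->.
by rewrite mulr0 mulr0.
Qed.

Lemma ptrace_prob m n (rho : 'M[C]_(m * n)) (M : 'M[C]_m) :
  probmx rho (M *t 1%:M) = probmx (ptrace2 rho) M.
Proof.
rewrite /probmx /mxtrace; congr complex.Re.
have bij : bijective (@mxtens_index m n).
  by exists (@mxtens_unindex m n); [exact: mxtens_indexK | exact: mxtens_unindexK].
rewrite (reindex _ (onW_bij _ bij)) /= sum_pair /=.
apply: eq_bigr => i _; rewrite mxE.
under eq_bigr => k _ do rewrite mxE (reindex _ (onW_bij _ bij)) sum_pair /=.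
under eq_bigr => k _ do under eq_bigr => j _ do under eq_bigr => l _ do rewrite tensmxE mxE.
under eq_bigr => k _ do under eq_bigr => j _ do rewrite sum_delta.
rewrite exchange_big; apply: eq_bigr => j _; rewrite mxE mulr_suml.
by apply: eq_bigr.
Qed.

Variables (X Y A B : finType).
Variables (muX : X -> R) (muY : Y -> R).
Variables (SKA : A -> X -> Y -> bool) (SKB : B -> X -> Y -> bool).

Lemma mu_sum1 : is_distr muX -> is_distr muY ->
  \sum_x \sum_y muX x * muY y = 1.
Proof.
move=> [_ hx] [_ hy].
under eq_bigr => x _ do rewrite -mulr_sumr hy mulr1.
exact: hx.
Qed.

Section Strat.
Variables (dA dB dE : nat) (rho : 'M[C]_(dA * dB * dE))
  (F : X -> Y -> bool -> 'M[C]_dE)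
  (P : X -> A -> 'M[C]_dA) (Q : Y -> B -> 'M[C]_dB).
Hypothesis hS : strategy3 rho F P Q.

Definition pr x y a b c := probmx rho ((P x a *t Q y b) *t F x y c).

Lemma pr_ge0 x y a b c : 0 <= pr x y a b c.
Proof.
case: hS => [[hr _] [hF [hP hQ]]].
apply: cone_prob => //; apply: cone_tens; first apply: cone_tens.
- exact: psd_cone ((hP x).1 a).
- exact: psd_cone ((hQ y).1 b).
- exact: psd_cone ((hF x y).1 c).
Qed.

Lemma pr_sumc x y a b :
  \sum_c pr x y a b c = probmx rho ((P x a *t Q y b) *t 1%:M).
Proof.
case: hS => [_ [hF _]].
by rewrite /pr -probmx_sum -tens_sumr (hF x y).2.
Qed.

Lemma pr_sum1 x y : \sum_a \sum_b \sum_c pr x y a b c = 1.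
Proof.
case: hS => [[_ htr] [hF [hP hQ]]].
under eq_bigr => a _ do under eq_bigr => b _ do rewrite pr_sumc.
under eq_bigr => a _ do rewrite -probmx_sum -tens_suml -tens_sumr (hQ y).2.
rewrite -probmx_sum -tens_suml -tens_suml (hP x).2 !tens11.
by rewrite /probmx mulmx1 htr.
Qed.


Lemma bool_ineq (a b c : bool) (p : R) : 0 <= p ->
  (a == c)%:R * p + (a == b)%:R * p <= p + ((a == c) && (b == c))%:R * p.
Proof.
move=> p0; case: a; case: b; case: c => /=; lra.
Qed.

Lemma key_xy x y :
  \sum_a \sum_b \sum_c (SKA a x y == c)%:R * pr x y a b c +
  \sum_a \sum_b (SKA a x y == SKB b x y)%:R * \sum_c pr x y a b c <=
  1 + \sum_a \sum_b \sum_c ((SKA a x y == c) && (SKB b x y == c))%:R * pr x y a b c.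
Proof.
rewrite -[X in _ <= X + _](pr_sum1 x y) -!big_split /=; apply: ler_sum => a _.
rewrite -!big_split /=; apply: ler_sum => b _.
rewrite mulr_sumr -!big_split /=; apply: ler_sum => c _.
exact: bool_ineq (pr_ge0 _ _ _ _ _).
Qed.

Lemma win3_le1 : is_distr muX -> is_distr muY ->
  win3 muX muY SKA SKB rho F P Q <= 1.
Proof.
move=> hX hY; rewrite /win3 -[leRHS](mu_sum1 hX hY); apply: ler_sum => x _.
apply: ler_sum => y _.
have m0 : 0 <= muX x * muY y by rewrite mulr_ge0 //; [case: hX | case: hY].
rewrite -[leRHS]mulr1 -[X in _ <= _ * X](pr_sum1 x y); apply: ler_wpM2l => //.
apply: ler_sum => a _; apply: ler_sum => b _; apply: ler_sum => c _.
have := pr_ge0 x y a b c; rewrite /pr.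
by case: (_ && _) => /=; rewrite ?mul1r ?mul0r.
Qed.

Lemma probGE_ge0 : is_distr muX -> is_distr muY ->
  0 <= probGE muX muY SKA rho F P Q.
Proof.
move=> hX hY; apply: sumr_ge0 => x _; apply: sumr_ge0 => y _.
apply: mulr_ge0; first by rewrite mulr_ge0 //; [case: hX | case: hY].
apply: sumr_ge0 => a _; apply: sumr_ge0 => b _; apply: sumr_ge0 => c _.
by apply: mulr_ge0 => //; apply: pr_ge0.
Qed.

Lemma key : is_distr muX -> is_distr muY ->
  probGE muX muY SKA rho F P Q +
  \sum_x \sum_y muX x * muY y *
    \sum_a \sum_b (SKA a x y == SKB b x y)%:R * \sum_c pr x y a b c <=
  1 + win3 muX muY SKA SKB rho F P Q.
Proof.
move=> hX hY; rewrite -[X in _ <= X + _](mu_sum1 hX hY) /probGE /win3 -!big_split /=.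
apply: ler_sum => x _; rewrite -!big_split /=; apply: ler_sum => y _.
have m0 : 0 <= muX x * muY y by rewrite mulr_ge0 //; [case: hX | case: hY].
rewrite -[X in _ <= X + _]mulr1 -!mulrDr; apply: ler_wpM2l => //.
exact: key_xy.
Qed.
End Strat.

Lemma win2_eq dA dB dE (rho : 'M[C]_(dA * dB * dE)) F (P : X -> A -> 'M[C]_dA)
  (Q : Y -> B -> 'M[C]_dB) (rho2 : 'M[C]_(dA * dB)) :
  strategy3 rho F P Q -> ptrace2 rho = rho2 ->
  win2 muX muY SKA SKB rho2 P Q =
  \sum_x \sum_y muX x * muY y *
    \sum_a \sum_b (SKA a x y == SKB b x y)%:R * \sum_c pr rho F P Q x y a b c.
Proof.
move=> hS <-; apply: eq_bigr => x _; apply: eq_bigr => y _; congr (_ * _).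
apply: eq_bigr => a _; apply: eq_bigr => b _.
by rewrite pr_sumc // ptrace_prob.
Qed.
End Q.

Lemma log_part (R : realType) (p wexp beta w3 : R) :
  0 < p -> p <= 1 - wexp + w3 -> 0 < 1 - beta + w3 ->
  (wexp - beta) / (ln 2 * (1 - beta + w3)) - log2 (1 - beta + w3) <= - log2 p.
Proof.
move=> p0 ps t0.
set t := 1 - beta + w3 in t0 *; set s := 1 - wexp + w3 in ps *.
have s0 : 0 < s by apply: lt_le_trans ps.
have L0 : 0 < ln (2 : R) by apply: ln_gt0; lra.
have h1 : ln p <= ln s by rewrite ler_ln // posrE.
have h2 : ln (s / t) = ln s - ln t by rewrite ln_div // posrE.
have h3 : ln (s / t) <= s / t - 1.
  have := @le_ln1Dx R (s / t - 1); rewrite [1 + _]addrC subrK; apply.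
  by rewrite ltrBrDl subrr divr_gt0.
have -> : (wexp - beta) / (ln 2 * t) = (1 - s / t) / ln 2.
  rewrite /s /t; field; apply/andP; split; rewrite gt_eqF //.
rewrite /log2 -mulrBl -[in leRHS]mulNr ler_pM2r ?invr_gt0 //.
lra.
Qed.

Theorem mainTheorem6 (R : realType) (X Y A B : finType)
  (muX : X -> R) (muY : Y -> R)
  (SKA : A -> X -> Y -> bool) (SKB : B -> X -> Y -> bool)
  (hmuX : is_distr muX) (hmuY : is_distr muY)
  (wexp : R)
  (hwexp : omega3 muX muY SKA SKB <= wexp <= omega2 muX muY SKA SKB)
  (dA dB dE : nat)
  (rho2 : 'M[R[i]]_(dA * dB))
  (P : X -> A -> 'M[R[i]]_dA) (Q : Y -> B -> 'M[R[i]]_dB)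
  (hS2 : strategy2 rho2 P Q)
  (hwin : wexp <= win2 muX muY SKA SKB rho2 P Q)
  (rho3 : 'M[R[i]]_(dA * dB * dE))
  (F : X -> Y -> bool -> 'M[R[i]]_dE)
  (hS3 : strategy3 rho3 F P Q)
  (hext : ptrace2 rho3 = rho2) :
  let pGE := probGE muX muY SKA rho3 F P Q in
  let w3 := omega3 muX muY SKA SKB in
  pGE <= 1 - wexp + w3 /\
  (forall beta : R, w3 <= beta <= omega2 muX muY SKA SKB ->
     0 < 1 - beta + w3 ->
     (* -log2 0 = +oo, so the inequality holds trivially when pGE = 0 *)
     pGE = 0 \/
     (wexp - beta) / (ln 2 * (1 - beta + w3)) - log2 (1 - beta + w3)
       <= - log2 pGE).
Proof.
move=> pGE w3; rewrite {}/pGE {}/w3.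
case/andP: hwexp => hw3 hw2.
have k := key SKA SKB hS3 hmuX hmuY.
have e2 := win2_eq muX muY SKA SKB hS3 hext.
have p0 := probGE_ge0 SKA hS3 hmuX hmuY.
have w3le : win3 muX muY SKA SKB rho3 F P Q <= omega3 muX muY SKA SKB.
  apply: ub_le_sup.
    exists 1 => p [dA' [dB' [dE' [r [F' [P' [Q' [hs ->]]]]]]]].
    have := win3_le1 SKA SKB hs hmuX hmuY. done.
  by exists dA, dB, dE, rho3, F, P, Q.
have h1 : probGE muX muY SKA rho3 F P Q <= 1 - wexp + omega3 muX muY SKA SKB.
  rewrite e2 in hwin; lra.
split => // beta _ ht.
have [->|pn0] := eqVneq (probGE muX muY SKA rho3 F P Q) 0; first by left.
right; apply: log_part => //.
by rewrite lt_def pn0.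
Qed.
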